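(* For every weak composition $a$, $\mathfrak{L}_a=\sum_{T\in\mathfrak{L}\mathrm{SSF}(a)}x^{\mathrm{wt}(T)}$.
   Context: Weak composition of length $n$: sequence of $n$ nonnegative integers. A local move replaces consecutive entries $(0,k)$ at positions $p,p+1$ by $(i,j)$, $i+j=k$, $i,j\ge0$; a fixed slide of $a$ is obtained from $a$ by a (possibly empty) sequence of such moves with $j>0$ required whenever $a_{p+1}\ne0$; $\mathfrak{L}_a=\sum x^b$ over the set of fixed slides $b$ of $a$. $D(a)$: $a_i$ left-justified boxes in row $i$, row 1 lowest; for a filling $T$, $\mathrm{wt}(T)_i$ is the number of entries $i$. Triples (rows $r<s$): Type A: $\gamma=(r,c),\alpha=(r,c+1),\beta=(s,c+1)$, $a_r\ge a_s$; Type B: $\gamma=(s,c),\alpha=(s,c+1),\beta=(r,c)$, $a_s>a_r$; inversion triple: $\beta>\gamma\ge\alpha$ or $\gamma\ge\alpha>\beta$. A semi-skyline filling: positive integer entries, rows weakly decreasing left to right, distinct column entries, all triples inversion triples. $\mathfrak{L}\mathrm{SSF}(a)$: semi-skyline fillings of $D(a)$ whose first-column entry in each nonempty row $i$ equals $i$ and such that whenever box $B$ is in a higher row than box $B'$, the entry of $B$ is strictly larger than that of $B'$. *)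

(* Defs.v *)
From HB Require Import structures.
From mathcomp Require Import all_boot all_order all_algebra.
From mathcomp Require Import mpoly.
Set Implicit Arguments. Unset Strict Implicit. Unset Printing Implicit Defensive.
Import GRing.Theory.

(* Rows/positions are 0-indexed: row r (0 <= r < n) of the paper-row r+1.
   Columns are 0-indexed: column c is paper-column c+1.
   The variable x_(i+1) of the paper is 'X_i (i : 'I_n). *)

Definition local_move (a c c' : seq nat) : bool :=
  (size c' == size c) &&
  [exists p : 'I_(size c),
     [&& p.+1 < size c,
         nth 0 c p == 0,
         nth 0 c' p + nth 0 c' p.+1 == nth 0 c p.+1,
         (nth 0 a p.+1 != 0) ==> (0 < nth 0 c' p.+1) &
         [forall q : 'I_(size c),
            ((q : nat) != p) && ((q : nat) != p.+1) ==> (nth 0 c' q == nth 0 c q)]]].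

(* Finite state space containing all fixed slides of a: moves preserve the
   length and the sum, so every entry is <= sumn a. *)
Definition slide_state (a : seq nat) := ((size a).-tuple 'I_(sumn a).+1)%type.

Definition st_seq (a : seq nat) (t : slide_state a) : seq nat := map val t.

Definition start_state (a : seq nat) : slide_state a :=
  [tuple inord (nth 0 a i) | i < size a].

Definition is_fixed_slide (a : seq nat) (t : slide_state a) : bool :=
  connect [rel u v : slide_state a | local_move a (st_seq u) (st_seq v)]
          (start_state a) t.

Definition slide_mono (a : seq nat) (t : slide_state a) : 'X_{1.. size a} :=
  [multinom (val (tnth t i)) | i < size a].

Definition Lpoly (a : seq nat) : {mpoly int[size a]} :=
  \sum_(t : slide_state a | is_fixed_slide t) 'X_[slide_mono t].

(* A filling of D(a) is encoded as a function on 'I_n * 'I_(sumn a)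
   (every box (r,c) of D(a) has c < a_r <= sumn a) with values in
   {0,...,n}; value 0 marks "no box" (entries of a filling are positive).
   Entries of LSSF fillings are automatically <= n. *)
Definition filling (a : seq nat) :=
  {ffun 'I_(size a) * 'I_(sumn a) -> 'I_(size a).+1}.

Definition inD (a : seq nat) (r c : nat) : bool := (r < size a) && (c < nth 0 a r).

(* entry of T at (r, c); 0 outside the index range *)
Definition ent (a : seq nat) (T : filling a) (r c : nat) : nat :=
  match (insub r : option 'I_(size a)), (insub c : option 'I_(sumn a)) with
  | Some r', Some c' => val (T (r', c'))
  | _, _ => 0
  end.

Definition inv_triple (g al b : nat) : bool :=
  ((g < b) && (al <= g)) || ((al <= g) && (b < al)).

Definition is_semi_skyline (a : seq nat) (T : filling a) : bool :=
  [forall r : 'I_(size a), forall c : 'I_(sumn a),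
     inD a r c == (0 < ent T r c)] &&
  [forall r : 'I_(size a), forall c : 'I_(sumn a), forall d : 'I_(sumn a),
     ((c < d) && inD a r d) ==> (ent T r d <= ent T r c)] &&
  [forall r : 'I_(size a), forall s : 'I_(size a), forall c : 'I_(sumn a),
     [&& r != s, inD a r c & inD a s c] ==> (ent T r c != ent T s c)] &&
  (* Type A triples: rows r < s, a_r >= a_s,
     gamma = (r,c), alpha = (r,c+1), beta = (s,c+1) *)
  [forall r : 'I_(size a), forall s : 'I_(size a), forall c : 'I_(sumn a),
     [&& r < s, nth 0 a s <= nth 0 a r, inD a r c, inD a r c.+1 & inD a s c.+1]
       ==> inv_triple (ent T r c) (ent T r c.+1) (ent T s c.+1)] &&
  (* Type B triples: rows r < s, a_s > a_r,
     gamma = (s,c), alpha = (s,c+1), beta = (r,c) *)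
  [forall r : 'I_(size a), forall s : 'I_(size a), forall c : 'I_(sumn a),
     [&& r < s, nth 0 a r < nth 0 a s, inD a s c, inD a s c.+1 & inD a r c]
       ==> inv_triple (ent T s c) (ent T s c.+1) (ent T r c)].

Definition is_LSSF (a : seq nat) (T : filling a) : bool :=
  is_semi_skyline T &&
  [forall r : 'I_(size a), (0 < nth 0 a r) ==> (ent T r 0 == r.+1)] &&
  [forall r : 'I_(size a), forall s : 'I_(size a),
   forall c : 'I_(sumn a), forall d : 'I_(sumn a),
     [&& r < s, inD a r c & inD a s d] ==> (ent T r c < ent T s d)].

Definition wt (a : seq nat) (T : filling a) : 'X_{1.. size a} :=
  [multinom #|[pred x | val (T x) == i.+1]| | i < size a].

(* Main.v *)
Require Import Defs.
From HB Require Import structures.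
From mathcomp Require Import all_boot all_order all_algebra.
From mathcomp Require Import mpoly.
From mathcomp Require Import zify.
Import GRing.Theory.
Set Implicit Arguments. Unset Strict Implicit. Unset Printing Implicit Defensive.

Lemma sorted_nth_le (s : seq nat) i j :
  sorted leq s -> i <= j -> j < size s -> nth 0 s i <= nth 0 s j.
Proof.
move=> ss ij js; apply: (sorted_leq_nth leq_trans leqnn 0 ss) => //.
by rewrite inE (leq_ltn_trans ij js).
Qed.

Lemma count_le_ge (s : seq nat) k j :
  sorted leq s -> j < size s -> nth 0 s j <= k ->
  j.+1 <= count (fun v => v <= k) s.
Proof.
move=> ss js sk.
rewrite -(cat_take_drop j.+1 s) count_cat.
have -> : count (fun v => v <= k) (take j.+1 s) = j.+1.
  have/eqP -> : count (fun v => v <= k) (take j.+1 s) == size (take j.+1 s).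
    rewrite -all_count; apply/(all_nthP 0) => i.
    rewrite size_takel // => ij; rewrite nth_take //.
    by apply: leq_trans sk; apply: sorted_nth_le.
  by rewrite size_takel.
by rewrite leq_addr.
Qed.

Lemma count_le_le (s : seq nat) k j :
  sorted leq s -> k < nth 0 s j ->
  count (fun v => v <= k) s <= j.
Proof.
move=> ss sk.
case: (ltnP j (size s)) => js; last first.
  by apply: leq_trans (count_size _ _) js.
rewrite -(cat_take_drop j s) count_cat.
have -> : count (fun v => v <= k) (drop j s) = 0.
  apply/eqP; rewrite -leqn0 leqNgt -has_count; apply/negP=> /(has_nthP 0) [i].
  rewrite size_drop nth_drop => ilt.
  rewrite leqNgt; apply/negP/negPn.
  apply: (leq_trans sk); apply: sorted_nth_le => //; first by rewrite leq_addr.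
  by rewrite -ltn_subRL.
rewrite addn0; apply: leq_trans (count_size _ _) _.
by rewrite size_takel // ltnW.
Qed.

Lemma nth_le_of_count (s : seq nat) k j :
  sorted leq s -> j < count (fun v => v <= k) s -> nth 0 s j <= k.
Proof.
move=> ss jc; rewrite leqNgt; apply/negP => /(count_le_le ss).
by rewrite leqNgt jc.
Qed.

Lemma nth_gt_of_count (s : seq nat) k j :
  sorted leq s -> count (fun v => v <= k) s <= j -> j < size s -> k < nth 0 s j.
Proof.
move=> ss cj js; rewrite ltnNge; apply/negP => /(count_le_ge ss js).
by rewrite ltnNge cj.
Qed.

Lemma sorted_count (s : seq nat) k m :
  sorted leq s -> m <= size s -> (0 < m -> nth 0 s m.-1 <= k) ->
  (m < size s -> k < nth 0 s m) -> count (fun v => v <= k) s = m.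
Proof.
move=> ss ms h1 h2; apply/eqP; rewrite eqn_leq; apply/andP; split.
  case: (ltngtP m (size s)) ms => // [ms _|-> _]; last by apply: count_size.
  by apply: count_le_le => //; apply: h2.
case: m ms h1 h2 => // m ms h1 _.
by apply: count_le_ge => //; apply: h1.
Qed.

Definition Lseq (n : nat) (b : seq nat) :=
  flatten [seq nseq (nth 0 b q) q.+1 | q <- iota 0 n].

Lemma mem_Lgen m n b x :
  x \in flatten [seq nseq (nth 0 b q) q.+1 | q <- iota m n] -> m < x <= m + n.
Proof.
move=> /flattenP [y /mapP [q]]; rewrite mem_iota => /andP [h1 h2] -> /nseqP [-> _].
by rewrite ltnS h1 h2.
Qed.

Lemma sorted_Lgen m n b :
  sorted leq (flatten [seq nseq (nth 0 b q) q.+1 | q <- iota m n]).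
Proof.
rewrite sorted_pairwise; last exact: leq_trans.
elim: n m => [|n IH] m //=.
rewrite pairwise_cat IH andbT; apply/andP; split.
  apply/allrelP => x y /nseqP [-> _] /mem_Lgen /andP [h _].
  by apply: ltnW.
rewrite -sorted_pairwise; last exact: leq_trans.
by elim: (nth 0 b m) => //= k; case: k => //= k ->; rewrite leqnn.
Qed.

Lemma sorted_Lseq n b : sorted leq (Lseq n b).
Proof. exact: sorted_Lgen. Qed.

Lemma mem_Lseq n b x : x \in Lseq n b -> 0 < x <= n.
Proof. exact: mem_Lgen. Qed.

Lemma count_Lseq (P : pred nat) n b :
  count P (Lseq n b) = sumn [seq P q.+1 * nth 0 b q | q <- iota 0 n].
Proof.
rewrite /Lseq count_flatten -map_comp; congr sumn; apply: eq_map => q /=.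
by rewrite count_nseq.
Qed.

Lemma sum_take_iota b k n : n <= size b ->
  sumn [seq (q < k) * nth 0 b q | q <- iota 0 n] = sumn (take (minn k n) b).
Proof.
elim: n => [|n IH] nb; first by rewrite minn0 take0.
rewrite -addn1 iotaD map_cat sumn_cat IH ?(ltnW nb) //= add0n addn0 addn1.
case: (ltnP n k) => nk.
  rewrite mul1n (minn_idPr nk) (take_nth 0 nb) sumn_rcons //.
by rewrite mul0n addn0 (minn_idPl (leqW nk)).
Qed.

Lemma count_le_Lseq b k :
  count (fun v => v <= k) (Lseq (size b) b) = sumn (take k b).
Proof.
rewrite count_Lseq sum_take_iota //.
case: (leqP k (size b)) => h //.
by rewrite take_size take_oversize // ltnW.
Qed.

Lemma count_le_S (s : seq nat) v :
  count (fun x => x <= v.+1) s = count (fun x => x <= v) s + count_mem v.+1 s.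
Proof.
elim: s => //= x s ->; rewrite addnACA; congr (_ + _).
rewrite leq_eqVlt ltnS; case: eqP => [->|_] //=; first by rewrite ltnn.
by rewrite addn0.
Qed.

Lemma count_mem_Lseq b v :
  count_mem v.+1 (Lseq (size b) b) = nth 0 b v.
Proof.
apply/eqP; rewrite -(eqn_add2l (count (fun x => x <= v) (Lseq (size b) b))).
rewrite -count_le_S !count_le_Lseq; apply/eqP.
case: (ltnP v (size b)) => h; first by rewrite (take_nth 0 h) sumn_rcons.
by rewrite !take_oversize ?nth_default ?addn0 // ltnW.
Qed.

Lemma size_Lseq b : size (Lseq (size b) b) = sumn b.
Proof.
rewrite /Lseq size_flatten /shape -map_comp.
rewrite -{3}(mkseq_nth 0 b) /mkseq; congr sumn; apply: eq_map => q /=.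
by rewrite size_nseq.
Qed.

Definition pre (s : seq nat) k := sumn (take k s).

Lemma pre_S s k : pre s k.+1 = pre s k + nth 0 s k.
Proof.
rewrite /pre; case: (ltnP k (size s)) => h; first by rewrite (take_nth 0 h) sumn_rcons.
by rewrite !take_oversize ?nth_default ?addn0 // ltnW.
Qed.

Lemma pre_size s k : size s <= k -> pre s k = sumn s.
Proof. by move=> h; rewrite /pre take_oversize. Qed.

Lemma pre0 s : pre s 0 = 0.
Proof. by rewrite /pre take0. Qed.

Lemma nth_le_sumn (s : seq nat) i : nth 0 s i <= sumn s.
Proof.
elim: s i => [|x s IH] [|i] //=; first by rewrite leq_addr.
by apply: leq_trans (IH i) _; rewrite leq_addl.
Qed.

Definition Char (a b : seq nat) : Prop :=
  [/\ size b = size a, sumn b = sumn a &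
      forall k, nth 0 a k != 0 -> pre b k.+1 = pre a k.+1 /\ 0 < nth 0 b k].

Lemma pre_transfer (c c' : seq nat) p :
  (forall q, q != p -> q != p.+1 -> nth 0 c' q = nth 0 c q) ->
  nth 0 c' p + nth 0 c' p.+1 = nth 0 c p + nth 0 c p.+1 ->
  forall k, k != p.+1 -> pre c' k = pre c k.
Proof.
move=> hq hs; elim/ltn_ind => [[|k] IH] hk; first by rewrite !pre0.
have kp : k != p by apply: contraNneq hk => ->.
case: (eqVneq k p.+1) => [ek|nk].
  rewrite ek (pre_S c') (pre_S c') (pre_S c) (pre_S c) IH; last 2 first.
  - by rewrite ek; lia.
  - by rewrite neq_ltn ltnSn.
  by rewrite -!addnA hs.
rewrite (pre_S c') (pre_S c) IH ?ltnSn // hq //.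

Qed.

Lemma char_transfer a c c' p :
  size c' = size c -> p.+1 < size c ->
  (forall q, q != p -> q != p.+1 -> nth 0 c' q = nth 0 c q) ->
  nth 0 c' p + nth 0 c' p.+1 = nth 0 c p + nth 0 c p.+1 ->
  nth 0 a p = 0 -> (nth 0 a p.+1 != 0 -> 0 < nth 0 c' p.+1) ->
  Char a c -> Char a c'.
Proof.
move=> hsz hp hq hs ap ap1 [hc1 hc2 hc3].
have hpre := pre_transfer hq hs.
split; first by rewrite hsz.
  rewrite -(pre_size (leqnn (size c'))) hsz hpre ?pre_size //.
  by rewrite neq_ltn hp orbT.
move=> k ak.
have kp : k != p by apply: contraNneq ak => ->; rewrite ap.
have [h1 h2] := hc3 k ak; split.
  by rewrite hpre // eqSS.
case: (eqVneq k p.+1) => [ek|nk]; first by rewrite ek ap1 // -ek.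
by rewrite hq.
Qed.

Lemma move_char a c c' : local_move a c c' -> Char a c -> Char a c'.
Proof.
case/andP => /eqP hsz /existsP [p /and5P [hp hcp hsum hpos /forallP hall]] hc.
have ap : nth 0 a p = 0.
  case: hc => _ _ hc3; apply/eqP; apply: contraTT hcp => /hc3 [_ h].
  by rewrite -lt0n.
apply: (char_transfer hsz hp _ _ ap _ hc) => //.
- move=> q q1 q2; case: (ltnP q (size c)) => hq.
    by apply/eqP; have := hall (Ordinal hq); rewrite /= q1 q2.
  by rewrite !nth_default // hsz.
- by rewrite (eqP hcp) (eqP hsum).
- by apply/implyP.
Qed.

Lemma char_ge a b k : Char a b -> pre a k <= pre b k.
Proof.
case=> _ _ h3; elim: k => [|k IH]; first by rewrite !pre0.
case: (eqVneq (nth 0 a k) 0) => [ak|ak]; last by rewrite (proj1 (h3 k ak)).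
by rewrite !pre_S ak addn0 (leq_trans IH) // leq_addr.
Qed.

Lemma char_eq a b : Char a b -> (forall q, nth 0 a q = 0 -> nth 0 b q = 0) -> b = a.
Proof.
move=> hc hz; have [h1 _ h3] := hc.
have hp : forall k, pre b k = pre a k.
  elim=> [|k IH]; first by rewrite !pre0.
  case: (eqVneq (nth 0 a k) 0) => [ak|ak]; last by rewrite (proj1 (h3 k ak)).
  by rewrite !pre_S IH ak hz.
apply: (eq_from_nth (x0 := 0)); first by rewrite h1.
move=> i _; have := hp i.+1; rewrite !pre_S hp.
by move/eqP; rewrite eqn_add2l => /eqP.
Qed.

Definition Phi (n : nat) (s : seq nat) := \sum_(k < n.+1) pre s k.

Definition rmove (b : seq nat) p :=
  mkseq (fun q => if q == p then 0 else if q == p.+1 then nth 0 b p + nth 0 b p.+1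
                  else nth 0 b q) (size b).

Lemma step a b : Char a b -> b <> a ->
  exists b', [/\ Char a b', local_move a b' b & Phi (size a) b' < Phi (size a) b].
Proof.
move=> hc hba; have [h1 h2 h3] := hc.
have [p [ap bp]] : exists p, nth 0 a p = 0 /\ 0 < nth 0 b p.
  case: (boolP [exists q : 'I_(size a), (nth 0 a q == 0) && (0 < nth 0 b q)]).
    by case/existsP => q /andP [/eqP ? ?]; exists q.
  move=> /existsPn hn; exfalso; apply: hba; apply: char_eq => // q aq.
  case: (ltnP q (size a)) => hq; last by rewrite nth_default // h1.
  by have := hn (Ordinal hq); rewrite /= aq eqxx /= lt0n negbK => /eqP.
have pn : p.+1 < size a.
  case: (ltnP p.+1 (size a)) => // hpn; exfalso.
  case: (ltnP p (size a)) => hp; last by move: bp; rewrite nth_default ?h1.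
  have ep : size a = p.+1 by apply/eqP; rewrite eqn_leq hpn hp.
  have := char_ge p hc; have := pre_size (leqnn (size b)).
  rewrite h1 ep pre_S h2 -(pre_size (leqnn (size a))) ep pre_S ap addn0.
  move=> e; rewrite -e. lia.
set b' := rmove b p.
have szb' : size b' = size a by rewrite size_mkseq h1.
have nb' : forall q, nth 0 b' q = if q < size a then (if q == p then 0 else if q == p.+1
     then nth 0 b p + nth 0 b p.+1 else nth 0 b q) else 0.
  move=> q; case: ltnP => hq; first by rewrite nth_mkseq ?h1.
  by rewrite nth_default ?szb'.
have hq : forall q, q != p -> q != p.+1 -> nth 0 b' q = nth 0 b q.
  move=> q q1 q2; rewrite nb' (negbTE q1) (negbTE q2).
  by case: ltnP => // hq; rewrite nth_default ?h1.
have hs : nth 0 b' p + nth 0 b' p.+1 = nth 0 b p + nth 0 b p.+1.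
  by rewrite !nb' pn (ltnW pn) eqxx (gtn_eqF (ltnSn p)) eqxx.
have hpre := pre_transfer hq hs.
exists b'; split.
- apply: (char_transfer (c := b) (p := p)) => //; first by rewrite szb'.
    by rewrite h1.
  move=> _; rewrite nb' pn (gtn_eqF (ltnSn p)) eqxx.
  by apply: leq_trans bp (leq_addr _ _).
- rewrite /local_move szb' h1 eqxx /=.
  have pb' : p < size a by rewrite ltnW.
  apply/existsP; exists (Ordinal pb') => /=.
  rewrite pn nb' (ltnW pn) eqxx /= nb' pn (gtn_eqF (ltnSn p)) eqxx eqxx /=.
  apply/andP; split.
    by apply/implyP => /(h3 p.+1) [_ ->].
  apply/forallP => q; apply/implyP => /andP [q1 q2].
  by rewrite hq.
- rewrite /Phi.
  have hp1 : p.+1 < (size a).+1 by rewrite ltnS ltnW.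
  rewrite (bigD1 (Ordinal hp1)) //= [X in _ < X](bigD1 (Ordinal hp1)) //=.
  have -> : \sum_(i < (size a).+1 | i != Ordinal hp1) pre b' i =
            \sum_(i < (size a).+1 | i != Ordinal hp1) pre b i.
    by apply: eq_bigr => i hi; rewrite hpre.
  rewrite ltn_add2r !pre_S hpre ?neq_ltn ?ltnSn //.
  rewrite nb' (ltnW pn) eqxx addn0.
  by rewrite -{1}(addn0 (pre b p)) ltn_add2l.
Qed.

Definition mkst a (b : seq nat) : slide_state a := [tuple inord (nth 0 b i) | i < size a].

Lemma size_st a (t : slide_state a) : size (st_seq t) = size a.
Proof. by rewrite /st_seq size_map size_tuple. Qed.

Lemma nth_st a (t : slide_state a) i (hi : i < size a) :
  nth 0 (st_seq t) i = tnth t (Ordinal hi).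
Proof.
by rewrite /st_seq (nth_map ord0) ?size_tuple // (tnth_nth ord0).
Qed.

Lemma st_mkst a b : size b = size a -> (forall i, nth 0 b i <= sumn a) ->
  st_seq (mkst a b) = b.
Proof.
move=> hs hb; apply: (eq_from_nth (x0 := 0)); first by rewrite size_st hs.
move=> i; rewrite size_st => hi; rewrite (nth_st _ hi) tnth_mktuple /=.
by rewrite inordK // ltnS.
Qed.

Lemma mkst_st a (t : slide_state a) : mkst a (st_seq t) = t.
Proof.
apply: eq_from_tnth => i; rewrite tnth_mktuple (nth_st _ (ltn_ord i)).
have -> : Ordinal (ltn_ord i) = i by apply: val_inj.
by apply: val_inj; rewrite /= inordK.
Qed.

Lemma st_inj a : injective (@st_seq a).
Proof. by move=> t1 t2 e; rewrite -(mkst_st t1) e mkst_st. Qed.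

Lemma char_bound a b : Char a b -> forall i, nth 0 b i <= sumn a.
Proof. by case=> _ h _ i; rewrite -h nth_le_sumn. Qed.

Lemma st_start a : st_seq (start_state a) = a.
Proof. exact: (st_mkst (erefl _) (@nth_le_sumn a)). Qed.

Lemma fixed_iff a (t : slide_state a) : is_fixed_slide t <-> Char a (st_seq t).
Proof.
split.
  move=> /connectP [p hp ->].
  have : Char a (st_seq (start_state a)).
    by rewrite st_start; split => // k ak; rewrite lt0n.
  elim: p (start_state a) hp => [|y p IH] x //=.
  by case/andP => hxy hp h; apply: IH hp (move_char hxy h).
move: {2}(Phi (size a) (st_seq t)) (leqnn (Phi (size a) (st_seq t))) => N.
elim: N t => [|N IH] t hN hc; rewrite /is_fixed_slide;
  (case: (eqVneq (st_seq t) a) => [e|ne];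
  [ have -> : t = start_state a by apply: st_inj; rewrite e st_start
  | ]); try exact: connect0;
  have [b' [hc' hm hlt]] := step hc (elimN eqP ne);
  have hst : st_seq (mkst a b') = b' by
     apply: st_mkst; [case: hc' | exact: char_bound hc'].
  by move: (leq_trans hlt hN).
apply: (connect_trans (y := mkst a b')); last first.
  by apply: connect1; rewrite /= hst.
apply: IH; last by rewrite hst.
by rewrite hst -ltnS (leq_trans hlt hN).
Qed.

Lemma ent_in a (T : filling a) r c (hr : r < size a) (hc : c < sumn a) :
  ent T r c = T (Ordinal hr, Ordinal hc).
Proof.
rewrite /ent (insubT (fun x => x < size a) hr) (insubT (fun x => x < sumn a) hc).
by [].
Qed.

Lemma ent_out a (T : filling a) r c : ~~ ((r < size a) && (c < sumn a)) -> ent T r c = 0.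
Proof.
rewrite /ent negb_and => h.
case: insubP => [r' hr _|//]; case: insubP => [c' hc _|//].
by rewrite hr hc in h.
Qed.

Lemma ent_le a (T : filling a) r c : ent T r c <= size a.
Proof.
case: (boolP ((r < size a) && (c < sumn a))) => [/andP [hr hc]|h].
  by rewrite (ent_in T hr hc) -ltnS.
by rewrite ent_out.
Qed.

Lemma inD_bound a r c : inD a r c -> (r < size a) && (c < sumn a).
Proof.
case/andP => hr hc; rewrite hr /=; exact: leq_trans hc (nth_le_sumn a r).
Qed.

Definition good a (T : filling a) : Prop :=
  [/\ forall r c, (0 < ent T r c) = inD a r c,
      forall r c d, c < d -> inD a r d -> ent T r d <= ent T r c,
      forall r, 0 < nth 0 a r -> ent T r 0 = r.+1 &
      forall r s c d, r < s -> inD a r c -> inD a s d -> ent T r c < ent T s d].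

Lemma LSSF_good a (T : filling a) : is_LSSF T -> good T.
Proof.
case/andP => /andP [/andP [/andP [/andP [/andP [/forallP c1 /forallP c2] _] _] _]
   /forallP c6] /forallP c7.
split.
- move=> r c; case: (boolP ((r < size a) && (c < sumn a))) => [/andP [hr hc]|h].
    by have := forallP (c1 (Ordinal hr)) (Ordinal hc) => /= /eqP <-.
  rewrite ent_out //; apply/esym/negP => /inD_bound; exact/negP.
- move=> r c d cd hd; have /andP [hr hdm] := inD_bound hd.
  have hcm : c < sumn a by apply: ltn_trans cd hdm.
  have := forallP (forallP (c2 (Ordinal hr)) (Ordinal hcm)) (Ordinal hdm).
  by rewrite /= cd hd => /implyP; apply.
- move=> r hr; case: (ltnP r (size a)) => hrn; last by rewrite nth_default in hr.
  by have := c6 (Ordinal hrn); rewrite /= hr => /eqP.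
- move=> r s c d rs hc hd.
  have /andP [hr hcm] := inD_bound hc; have /andP [hs hdm] := inD_bound hd.
  have := c7 (Ordinal hr) => /forallP /(_ (Ordinal hs)) /forallP /(_ (Ordinal hcm)).
  move=> /forallP /(_ (Ordinal hdm)) /=; rewrite rs hc hd => /implyP; apply; by [].
Qed.

Lemma good_LSSF a (T : filling a) : good T -> is_LSSF T.
Proof.
case=> p1 p2 p3 p4.
apply/andP; split; last first.
  apply/forallP => r; apply/forallP => s; apply/forallP => c; apply/forallP => d.
  by apply/implyP => /and3P [rs hc hd]; apply: p4.
apply/andP; split; last first.
  by apply/forallP => r; apply/implyP => hr; rewrite p3.
apply/andP; split; last first.
  apply/forallP => r; apply/forallP => s; apply/forallP => c.
  apply/implyP => /and5P [rs hrs hs1 hs2 hr].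
  have h1 := p2 s c c.+1 (ltnSn c) hs2; have h2 := p4 r s c c.+1 rs hr hs2.
  by rewrite /inv_triple h1 h2 orbT.
apply/andP; split; last first.
  apply/forallP => r; apply/forallP => s; apply/forallP => c.
  apply/implyP => /and5P [rs hrs hr1 hr2 hs].
  have h1 := p2 r c c.+1 (ltnSn c) hr2; have h2 := p4 r s c c.+1 rs hr1 hs.
  by rewrite /inv_triple h1 h2.
apply/andP; split; last first.
  apply/forallP => r; apply/forallP => s; apply/forallP => c.
  apply/implyP => /and3P [rs hr hs].
  case: (ltngtP r s) rs => [h|h|h] rs.
  - by rewrite neq_ltn (p4 r s c c h hr hs).
  - by rewrite neq_ltn (p4 s r c c h hs hr) orbT.
  - by move: rs; rewrite (val_inj h) eqxx.
apply/andP; split.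
  by apply/forallP => r; apply/forallP => c; rewrite p1.
apply/forallP => r; apply/forallP => c; apply/forallP => d.
by apply/implyP => /andP [cd hd]; apply: p2.
Qed.

Definition rowT a (T : filling a) r := [seq ent T r c | c <- iota 0 (nth 0 a r)].
Definition Rd a (T : filling a) := flatten [seq rev (rowT T r) | r <- iota 0 (size a)].

Lemma shape_R a (T : filling a) : shape [seq rev (rowT T r) | r <- iota 0 (size a)] = a.
Proof.
rewrite /shape -map_comp -{3}(mkseq_nth 0 a) /mkseq; apply: eq_map => r /=.
by rewrite size_rev size_map size_iota.
Qed.

Lemma size_R a (T : filling a) : size (Rd T) = sumn a.
Proof. by rewrite /Rd size_flatten shape_R. Qed.

Lemma nth_R a (T : filling a) r j : r < size a -> j < nth 0 a r ->
  nth 0 (Rd T) (pre a r + j) = ent T r (nth 0 a r - j.+1).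
Proof.
move=> hr hj; rewrite /Rd nth_flatten shape_R.
have e1 : reshape_index a (pre a r + j) = r by exact: (flatten_indexKl hj).
have e2 : reshape_offset a (pre a r + j) = j by exact: (flatten_indexKr hj).
rewrite e1 e2 (nth_map 0) ?size_iota // nth_iota // add0n.
rewrite nth_rev /rowT size_map size_iota // (nth_map 0) ?size_iota; last first.
  by rewrite ltn_subLR // addSnnS leq_addl.
by rewrite nth_iota ?add0n // ltn_subLR // addSnnS leq_addl.
Qed.

Lemma decomp a k : k < sumn a ->
  exists r j, [/\ r < size a, j < nth 0 a r & k = pre a r + j].
Proof.
move=> hk; exists (reshape_index a k), (reshape_offset a k); split.
- exact: reshape_indexP.
- exact: reshape_offsetP.
- by rewrite -{1}(reshape_indexK a k).
Qed.

Lemma pre_mono s r r' : r <= r' -> pre s r <= pre s r'.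
Proof.
move=> h; rewrite -(subnK h); elim: (r' - r) => [|d IH] //.
by rewrite addSn pre_S (leq_trans IH) // leq_addr.
Qed.

Lemma sorted_R a (T : filling a) : good T -> sorted leq (Rd T).
Proof.
case=> p1 p2 p3 p4; apply/(sortedP 0) => k; rewrite size_R => hk.
have [r' [j' [hr' hj' ek]]] := decomp hk.
case: j' hj' ek => [|j'] hj' ek.
  have [r [j [hr hj ek0]]] := decomp (ltnW hk).
  have rr : r < r'.
    rewrite ltnNge; apply/negP => h; have := pre_mono a h; lia.
  rewrite ek ek0 (nth_R T hr hj) (nth_R T hr' hj').
  apply: ltnW; apply: p4 => //; apply/andP; split=> //; lia.
have hj0 : j' < nth 0 a r' by apply: ltnW.
have ek' : k = pre a r' + j' by lia.
rewrite ek ek' (nth_R T hr' hj0) (nth_R T hr' hj'); apply: p2; first lia.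
apply/andP; split=> //; lia.
Qed.

Lemma mem_R a (T : filling a) x : good T -> x \in Rd T -> 0 < x <= size a.
Proof.
case=> p1 _ _ _ /(nthP 0) [k]; rewrite size_R => hk <-.
have [r [j [hr hj ->]]] := decomp hk.
rewrite (nth_R T hr hj) ent_le p1 /inD hr /=; lia.
Qed.

Lemma count_iota (P : pred nat) k : count P (iota 0 k) = \sum_(c < k) P c.
Proof.
rewrite -sum1_count big_mkcond /= -(big_mkord xpredT (fun c => (P c : nat))).
by rewrite /index_iota subn0; apply: eq_bigr => c _; case: (P c).
Qed.

Lemma sumn_iota (f : nat -> nat) k : sumn [seq f c | c <- iota 0 k] = \sum_(c < k) f c.
Proof.
by rewrite sumnE big_map -(big_mkord xpredT f) /index_iota subn0.
Qed.

Lemma count_R a (T : filling a) v : good T -> 0 < v ->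
  #|[pred x | val (T x) == v]| = count_mem v (Rd T).
Proof.
move=> hg hv; have [p1 _ _ _] := hg.
rewrite -sum1_card big_mkcond /=.
have -> : \sum_(i : 'I_(size a) * 'I_(sumn a)) (if val (T i) == v then 1 else 0) =
          \sum_(r < size a) \sum_(c < sumn a) (ent T r c == v).
  rewrite (pair_big xpredT xpredT (fun (r : 'I_(size a)) (c : 'I_(sumn a)) =>
     (ent T r c == v) : nat)) /=.
  apply: eq_bigr => -[r c] _ /=; rewrite (ent_in T (ltn_ord r) (ltn_ord c)).
  have -> : Ordinal (ltn_ord r) = r by apply: val_inj.
  have -> : Ordinal (ltn_ord c) = c by apply: val_inj.
  by case: (_ == v).
rewrite /Rd count_flatten -map_comp sumn_iota. apply eq_bigr => r _ /=.
rewrite count_rev /rowT count_map count_iota.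
rewrite (big_ord_widen (sumn a) (fun c => (ent T r c == v) : nat) (nth_le_sumn a r)).
rewrite [RHS]big_mkcond /=; apply: eq_bigr => c _.
case: ltnP => // hc; case: eqP => // e; exfalso.
by have := p1 r c; rewrite e hv /inD [c < _]ltnNge hc andbF.
Qed.

Definition cnts a (T : filling a) : seq nat :=
  [seq #|[pred x | val (T x) == q.+1]| | q <- iota 0 (size a)].

Lemma size_cnts a (T : filling a) : size (cnts T) = size a.
Proof. by rewrite size_map size_iota. Qed.

Lemma nth_cnts a (T : filling a) q : q < size a ->
  nth 0 (cnts T) q = #|[pred x | val (T x) == q.+1]|.
Proof. by move=> hq; rewrite (nth_map 0) ?size_iota // nth_iota. Qed.

Lemma pre_S' a r : pre a r.+1 = pre a r + nth 0 a r.
Proof. exact: pre_S. Qed.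

Lemma R_eq_L a (T : filling a) : good T -> Rd T = Lseq (size a) (cnts T).
Proof.
move=> hg; apply: (sorted_eq leq_trans anti_leq (sorted_R hg)).
  exact: sorted_Lseq.
rewrite /perm_eq; apply/allP => x _ /=; apply/eqP.
rewrite -[in Lseq _ _](size_cnts T).
case: x => [|q].
  rewrite (count_memPn _); last by apply/negP => /(mem_R hg).
  by apply/esym/count_memPn/negP => /mem_Lseq.
rewrite count_mem_Lseq -count_R //.
case: (ltnP q (size a)) => hq; first by rewrite nth_cnts.
rewrite nth_default ?size_cnts // count_R //.
by apply/count_memPn/negP => /(mem_R hg) /andP [_]; rewrite leqNgt ltnS hq.
Qed.

Definition Tof a (b : seq nat) : filling a :=
  [ffun x : 'I_(size a) * 'I_(sumn a) => if x.2 < nth 0 a x.1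
             then inord (nth 0 (Lseq (size a) b) (pre a (x.1).+1 - (x.2).+1))
             else ord0].

Lemma pre_le_sumn s k : pre s k <= sumn s.
Proof.
case: (leqP k (size s)) => h; last by rewrite pre_size // ltnW.
by rewrite -(pre_size (leqnn (size s))); apply: pre_mono.
Qed.

Lemma good_Tof_eq a (T : filling a) : good T -> T = Tof a (cnts T).
Proof.
move=> hg; have [p1 _ _ _] := hg.
apply/ffunP => -[r c]; rewrite ffunE /=.
case: ltnP => hc.
  apply: val_inj; rewrite /= -(R_eq_L hg).
  have hj : nth 0 a r - c.+1 < nth 0 a r by lia.
  have -> : pre a r.+1 - c.+1 = pre a r + (nth 0 a r - c.+1) by rewrite pre_S; lia.
  rewrite (nth_R T (ltn_ord r) hj) inordK; last by rewrite ltnS ent_le.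
  have -> : nth 0 a r - (nth 0 a r - c.+1).+1 = c by lia.
  rewrite (ent_in T (ltn_ord r) (ltn_ord c)).
  have -> : Ordinal (ltn_ord r) = r by apply: val_inj.
  have -> : Ordinal (ltn_ord c) = c by apply: val_inj.
  by [].
apply: val_inj => /=; have := p1 r c; rewrite /inD ltn_ord /= [c < _]ltnNge hc /=.
rewrite (ent_in T (ltn_ord r) (ltn_ord c)).
have -> : Ordinal (ltn_ord r) = r by apply: val_inj.
have -> : Ordinal (ltn_ord c) = c by apply: val_inj.
by case: (val (T (r, c))).
Qed.

Lemma good_char a (T : filling a) : good T -> Char a (cnts T).
Proof.
move=> hg; have [p1 p2 p3 p4] := hg.
have hRL := R_eq_L hg.
have hs : sumn (cnts T) = sumn a.
  by rewrite -(size_R T) hRL -(size_cnts T) size_Lseq.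
split=> //; first exact: size_cnts.
move=> k ak.
have hk : k < size a by case: ltnP ak => // h; rewrite nth_default.
have ak0 : 0 < nth 0 a k by rewrite lt0n.
have hj : nth 0 a k - 1 < nth 0 a k by lia.
have hRk : nth 0 (Rd T) (pre a k + (nth 0 a k - 1)) = k.+1.
  rewrite (nth_R T hk hj); have -> : nth 0 a k - (nth 0 a k - 1).+1 = 0 by lia.
  exact: p3.
split.
  rewrite [pre (cnts T) _]/pre -count_le_Lseq size_cnts -hRL.
  apply: sorted_count; first exact: sorted_R.
  - by rewrite size_R pre_le_sumn.
  - move=> _; rewrite pre_S.
    have -> : (pre a k + nth 0 a k).-1 = pre a k + (nth 0 a k - 1) by lia.
    by rewrite hRk.
  move=> hm; rewrite size_R in hm.
  have [r [j [hr hj' e]]] := decomp hm.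
  have kr : k < r.
    rewrite ltnNge; apply/negP => h.
    have : r.+1 <= k.+1 by [].
    move=> /(pre_mono a); rewrite (pre_S a r) => h'; lia.
  rewrite e (nth_R T hr hj') -{1}(p3 k ak0); apply: p4 => //.
    by rewrite /inD hk.
  by rewrite /inD hr /=; lia.
rewrite nth_cnts // count_R //.
rewrite -has_count has_pred1.
rewrite -hRk mem_nth // size_R.
by have := pre_le_sumn a k.+1; rewrite pre_S; lia.
Qed.

Lemma nth_L_le n b j : nth 0 (Lseq n b) j <= n.
Proof.
case: (ltnP j (size (Lseq n b))) => h; last by rewrite nth_default.
by have /andP [] := mem_Lseq (mem_nth 0 h).
Qed.

Lemma ent_Tof a b r c :
  ent (Tof a b) r c = if inD a r c then nth 0 (Lseq (size a) b) (pre a r.+1 - c.+1) else 0.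
Proof.
case: (boolP ((r < size a) && (c < sumn a))) => [/andP [hr hc]|h].
  rewrite (ent_in _ hr hc) ffunE /= /inD hr /=.
  by case: ifP => // _; rewrite inordK // ltnS nth_L_le.
rewrite ent_out //; case: ifP => // /inD_bound h'; by rewrite h' in h.
Qed.

Lemma char_good a b : Char a b -> good (Tof a b) /\ cnts (Tof a b) = b.
Proof.
move=> hch; have [h1 h2 h3] := hch.
set L := Lseq (size a) b.
have sL : sorted leq L by apply: sorted_Lseq.
have cL : forall k, count (fun v => v <= k) L = pre b k.
  by move=> k; rewrite /L -h1 count_le_Lseq.
have szL : size L = sumn a by rewrite /L -h1 size_Lseq.
have idx : forall r c, inD a r c -> pre a r <= pre a r.+1 - c.+1 < pre a r.+1.
  by move=> r c /andP [_ hc]; rewrite pre_S; lia.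
have idxL : forall r c, inD a r c -> pre a r.+1 - c.+1 < size L.
  move=> r c h; have /andP [_ h'] := idx r c h.
  by rewrite szL (leq_trans h') // pre_le_sumn.
have le1 : forall r c, inD a r c -> nth 0 L (pre a r.+1 - c.+1) <= r.+1.
  move=> r c h; apply: nth_le_of_count => //.
  have /andP [_ h'] := idx r c h.
  rewrite cL (proj1 (h3 r _)) //.
  by case/andP: h => _ hc; rewrite -lt0n; lia.
have gt1 : forall r j, 0 < nth 0 a r -> pre a r.+1 <= j -> j < size L -> r.+1 < nth 0 L j.
  move=> r j ar hj hjL; apply: nth_gt_of_count => //.
  by rewrite cL (proj1 (h3 r _)) // -lt0n.
have good1 : good (Tof a b).
  split.
  - move=> r c; rewrite ent_Tof; case: ifP => // h.
    by have /andP [] := mem_Lseq (mem_nth 0 (idxL r c h)).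
  - move=> r c d cd hd; have hcD : inD a r c.
      by move: (hd); rewrite /inD => /andP [-> hd'] /=; apply: ltn_trans cd hd'.
    rewrite !ent_Tof hd hcD; apply: sorted_nth_le => //; last exact: idxL hcD.
    by case/andP: hd => _ hd'; lia.
  - move=> r ar; have hD : inD a r 0.
      rewrite /inD ar andbT; case: (ltnP r (size a)) => // h.
      by move: ar; rewrite nth_default.
    rewrite ent_Tof hD; apply/anti_leq; rewrite le1 //=.
    apply: nth_gt_of_count => //; last exact: idxL hD.
    rewrite cL; have [e bp] := h3 r (lt0n_neq0 ar).
    have := pre_S b r; rewrite e pre_S => e'; lia.
  - move=> r s c d rs hr hs; rewrite !ent_Tof hr hs.
    apply: (@leq_ltn_trans r.+1); first exact: le1.
    apply: gt1.
    + by case/andP: hr => _ hr'; lia.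
    + have /andP [h _] := idx s d hs; apply: leq_trans h; exact: pre_mono.
    + exact: idxL.
split=> //.
have RL : Rd (Tof a b) = L.
  apply: (eq_from_nth (x0 := 0)); first by rewrite size_R szL.
  move=> k; rewrite size_R => hk.
  have [r [j [hr hj ->]]] := decomp hk.
  rewrite (nth_R _ hr hj) ent_Tof.
  have hD : inD a r (nth 0 a r - j.+1) by rewrite /inD hr /=; lia.
  rewrite hD; congr nth; rewrite pre_S; lia.
apply: (eq_from_nth (x0 := 0)); first by rewrite size_cnts h1.
move=> q; rewrite size_cnts => hq.
by rewrite nth_cnts // count_R // RL /L -h1 count_mem_Lseq.
Qed.

Lemma cnts_bound a (T : filling a) : is_LSSF T -> forall i, nth 0 (cnts T) i <= sumn a.
Proof. by move=> /LSSF_good /good_char; apply: char_bound. Qed.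

Local Open Scope ring_scope.

Theorem proposition4p11 (a : seq nat) :
  Lpoly a = \sum_(T : filling a | is_LSSF T) 'X_[wt T].
Proof.
rewrite /Lpoly (reindex_onto (fun t : slide_state a => Tof a (st_seq t))
                             (fun T : filling a => mkst a (cnts T))); last first.
  move=> T hT; rewrite st_mkst ?size_cnts //; last exact: cnts_bound.
  by rewrite -good_Tof_eq //; apply: LSSF_good.
apply: eq_big => t.
  apply/idP/idP.
    move/fixed_iff => hc; have [hg hcn] := char_good hc.
    by rewrite good_LSSF //= hcn mkst_st eqxx.
  case/andP => hL /eqP he; apply/fixed_iff.
  have hg := LSSF_good hL; have hch := good_char hg.
  rewrite -he st_mkst //; [by rewrite size_cnts | exact: char_bound hch].
move/fixed_iff => hc; have [hg hcn] := char_good hc.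
congr ('X_[_]); apply/mnmP => i.
rewrite /wt /slide_mono !multinomE !tnth_mktuple.
rewrite -(nth_cnts (Tof a (st_seq t)) (ltn_ord i)) hcn (nth_st _ (ltn_ord i)).
by have -> : Ordinal (ltn_ord i) = i by apply: val_inj.
Qed.
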